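(* Every triality of a thick building of type $\mathsf{D}_4$ is capped.
   Context: The Coxeter graph $\mathsf{D}_4$ has central node $2$ joined to nodes $1,3,4$. A triality is an automorphism of the building inducing an order $3$ automorphism of the Coxeter graph (cyclically permuting $1,3,4$). Simplices are opposite if every chamber containing either is opposite some chamber containing the other. $\mathrm{Opp}(\theta)$ is the set of simplices opposite their image; $\mathrm{Type}(\theta)$ is the union of the type sets of simplices in $\mathrm{Opp}(\theta)$; $\theta$ is capped if $\mathrm{Opp}(\theta)$ contains a simplex of type $\mathrm{Type}(\theta)$. *)

(* Defs.v *)
(* Buildings of type D4 via the W-metric (Abramenko-Brown,
   Def. 5.1), with W = W(D4) realized concretely as signed permutations of
   {+-e1,..,+-e4} with an even number of sign changes. *)
From mathcomp Require Import all_boot all_order all_fingroup.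
Set Implicit Arguments. Unset Strict Implicit. Unset Printing Implicit Defensive.

(* Ts = {+-e_i}: (i, true) = +e_(i+1), (i, false) = -e_(i+1). *)
Definition Ts := ('I_4 * bool)%type.

Definition e (i : nat) (b : bool) : Ts := (inord i, b).

(* simple reflections, Bourbaki labelling of D4:
   a1 = e1-e2, a2 = e2-e3, a3 = e3-e4, a4 = e3+e4; node 2 is central.
   Node k of the paper is the index k-1 : 'I_4. *)
Definition s1 : {perm Ts} := (tperm (e 0 true) (e 1 true) * tperm (e 0 false) (e 1 false))%g.
Definition s2 : {perm Ts} := (tperm (e 1 true) (e 2 true) * tperm (e 1 false) (e 2 false))%g.
Definition s3 : {perm Ts} := (tperm (e 2 true) (e 3 true) * tperm (e 2 false) (e 3 false))%g.
Definition s4 : {perm Ts} := (tperm (e 2 true) (e 3 false) * tperm (e 2 false) (e 3 true))%g.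

Definition gen (i : 'I_4) : {perm Ts} :=
  match val i with 0 => s1 | 1 => s2 | 2 => s3 | _ => s4 end.

Definition WK (K : {set 'I_4}) : {set {perm Ts}} := <<[set gen i | i in K]>>%g.
Definition WD4 : {set {perm Ts}} := WK setT.

Definition word_prod (s : seq 'I_4) : {perm Ts} := (\prod_(i <- s) gen i)%g.

Definition coxlen (w : {perm Ts}) (n : nat) : Prop :=
  (exists s, size s = n /\ word_prod s = w) /\
  (forall s, word_prod s = w -> n <= size s).

Section Building.
Variable T : Type.
Variable delta : T -> T -> {perm Ts}.

Definition is_building : Prop :=
  [/\ inhabited T,
      (forall C D, delta C D \in WD4),
      (forall C D, delta C D = 1%g <-> C = D),
      (forall C C' D i, delta C' C = gen i ->
          (delta C' D = (gen i * delta C D)%g \/ delta C' D = delta C D) /\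
          (forall n, coxlen (delta C D) n -> coxlen (gen i * delta C D)%g n.+1 ->
              delta C' D = (gen i * delta C D)%g)) &
      (forall C D i, exists C', delta C' C = gen i /\
                                delta C' D = (gen i * delta C D)%g)].

(* thick: every panel contains at least three chambers *)
Definition thick : Prop :=
  forall C i, exists C1 C2, [/\ C1 <> C2, delta C C1 = gen i & delta C C2 = gen i].

Definition opp_ch (C D : T) : Prop :=
  forall w n m, w \in WD4 -> coxlen w n -> coxlen (delta C D) m -> n <= m.

(* chambers containing the simplex of type J determined by chamber C
   (= residue of type S \ J containing C) *)
Definition chambers_of (C : T) (J : {set 'I_4}) (D : T) : Prop :=
  delta C D \in WK (~: J).

Definition opp_simplices (A B : T -> Prop) : Prop :=
  (forall x, A x -> exists y, B y /\ opp_ch x y) /\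
  (forall y, B y -> exists x, A x /\ opp_ch y x).

Variable theta : T -> T.

Definition is_triality (sigma : {perm 'I_4}) : Prop :=
  [/\ bijective theta,
      (forall C D i, delta C D = gen i <-> delta (theta C) (theta D) = gen (sigma i)),
      sigma (inord 1) = inord 1 &
      #[sigma]%g = 3].

Definition in_Opp (C : T) (J : {set 'I_4}) : Prop :=
  opp_simplices (chambers_of C J)
                (fun y => exists x, chambers_of C J x /\ y = theta x).

Definition is_Type_theta (J : {set 'I_4}) : Prop :=
  forall i, i \in J <-> exists C' J', in_Opp C' J' /\ i \in J'.

Definition capped : Prop :=
  exists C J, in_Opp C J /\ is_Type_theta J.
End Building.

(* Main.v *)
Require Import Defs.
From mathcomp Require Import all_boot all_order all_fingroup.
From Stdlib Require Import Classical.
Set Implicit Arguments. Unset Strict Implicit. Unset Printing Implicit Defensive.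


Definition o0 : 'I_4 := @Ordinal 4 0 isT.
Definition o1 : 'I_4 := @Ordinal 4 1 isT.
Definition o2 : 'I_4 := @Ordinal 4 2 isT.
Definition o3 : 'I_4 := @Ordinal 4 3 isT.
Definition o4 (k : nat) : 'I_4 :=
  match k with 0 => o0 | 1 => o1 | 2 => o2 | _ => o3 end.

Lemma o4_val (i : 'I_4) : o4 (val i) = i.
Proof. by case: i => [[|[|[|[|k]]]] Hk] //=; apply/val_inj. Qed.

Lemma eE k b : k < 4 -> e k b = (o4 k, b).
Proof.
by case: k => [|[|[|[|k]]]] // _; rewrite /e; congr pair; apply/val_inj; rewrite /= inordK.
Qed.

Definition tp (a b z : Ts) : Ts := if z == a then b else if z == b then a else z.
Definition ts (k : nat) (b : bool) : Ts := (o4 k, b).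

Definition g (k : nat) (z : Ts) : Ts :=
  match k with
  | 0 => tp (ts 0 false) (ts 1 false) (tp (ts 0 true) (ts 1 true) z)
  | 1 => tp (ts 1 false) (ts 2 false) (tp (ts 1 true) (ts 2 true) z)
  | 2 => tp (ts 2 false) (ts 3 false) (tp (ts 2 true) (ts 3 true) z)
  | _ => tp (ts 2 false) (ts 3 true) (tp (ts 2 true) (ts 3 false) z)
  end.

Definition gn (k : nat) := gen (o4 k).

Lemma gnE k z : gn k z = g k z.
Proof.
rewrite /gn /gen; case: k => [|[|[|[|k]]]] /=;
by rewrite ?/s1 ?/s2 ?/s3 ?/s4 permM /tperm !permE /= !eE.
Qed.

Lemma genE (i : 'I_4) : gen i = gn (val i).
Proof. by rewrite /gn o4_val. Qed.

Definition wpn (f : seq nat) : {perm Ts} := word_prod (map o4 f).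
Definition wf (f : seq nat) (x : Ts) : Ts := foldl (fun y k => g k y) x f.

Lemma wpn_cons k f : wpn (k :: f) = (gn k * wpn f)%g.
Proof. by rewrite /wpn /word_prod /= big_cons. Qed.

Lemma wpn_cat f h : wpn (f ++ h) = (wpn f * wpn h)%g.
Proof. by rewrite /wpn /word_prod map_cat big_cat. Qed.

Lemma wpn_nil : wpn [::] = 1%g.
Proof. by rewrite /wpn /word_prod big_nil. Qed.

Lemma wpnE f x : wpn f x = wf f x.
Proof.
elim: f x => [|k f IH] x; first by rewrite wpn_nil perm1.
by rewrite wpn_cons permM IH gnE.
Qed.

Definition pts : seq Ts := [:: ts 0 true; ts 0 false; ts 1 true; ts 1 false;
  ts 2 true; ts 2 false; ts 3 true; ts 3 false].

Lemma mem_pts (x : Ts) : x \in pts.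
Proof. by case: x => [[[|[|[|[|k]]]] Hk] []]. Qed.

Definition code (x : Ts) : nat := (val x.1).*2 + ~~ x.2.

Lemma code_inj : injective code.
Proof.
move=> [i b] [j c]; rewrite /code /= => H.
have H1 : odd ((val i).*2 + ~~ b) = odd ((val j).*2 + ~~ c) by rewrite H.
rewrite !oddD !odd_double /= in H1.
have Hb : b = c by move: H1 {H}; case: b; case: c.
subst c; congr pair; apply/val_inj/double_inj; exact: (addIn H).
Qed.

Definition tbl (k : nat) : seq nat :=
  match k with
  | 0 => [:: 2; 3; 0; 1; 4; 5; 6; 7]
  | 1 => [:: 0; 1; 4; 5; 2; 3; 6; 7]
  | 2 => [:: 0; 1; 2; 3; 6; 7; 4; 5]
  | _ => [:: 0; 1; 2; 3; 7; 6; 5; 4]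
  end.
Definition gc (k c : nat) : nat := nth c (tbl k) c.

Lemma code_g k x : code (g k x) = gc k (code x).
Proof.
have H : forall k, k < 4 -> all (fun x => code (g k x) == gc k (code x)) pts.
  by case=> [|[|[|[|m]]]] // _; vm_compute.
have [Hk|Hk] := ltnP k 4.
  by move/allP: (H k Hk) => /(_ x (mem_pts x)) /eqP.
have -> : g k = g 3 by case: k Hk => [|[|[|k]]].
have -> : gc k = gc 3 by case: k Hk => [|[|[|k]]].
by move/allP: (H 3 isT) => /(_ x (mem_pts x)) /eqP.
Qed.

Definition wc (f : seq nat) (c : nat) : nat := foldl (fun c k => gc k c) c f.

Lemma code_wf f x : code (wf f x) = wc f (code x).
Proof. by elim: f x => [|k f IH] x //=; rewrite IH code_g. Qed.

Definition key (f : seq nat) : seq nat := map (wc f) (iota 0 8).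
Definition eqw (f h : seq nat) : bool := key f == key h.

Lemma eqwP f h : eqw f h -> wpn f = wpn h.
Proof.
move=> /eqP H; apply/permP => x; rewrite !wpnE; apply: code_inj; rewrite !code_wf.
have Hx : code x \in iota 0 8.
  by rewrite mem_iota; case: x => [[[|[|[|[|k]]]] Hk] []].
by move/eq_in_map: H => /(_ _ Hx).
Qed.

Definition neg (x y : Ts) : bool := if val x.1 < val y.1 then ~~ x.2 else ~~ y.2.
Definition negc (c d : nat) : bool := if c./2 < d./2 then odd c else odd d.

Lemma neg_code x y : neg x y = negc (code x) (code y).
Proof.
have Hh : forall z : Ts, (code z)./2 = val z.1.
  by move=> [i b]; rewrite /code /= addnC half_bit_double.
have Ho : forall z : Ts, odd (code z) = ~~ z.2.
  by move=> [i b]; rewrite /code /= oddD odd_double; case: b.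
by rewrite /neg /negc !Hh !Ho.
Qed.

Definition posroots : seq (Ts * Ts) :=
  [:: (ts 0 true, ts 1 true); (ts 0 true, ts 1 false);
      (ts 0 true, ts 2 true); (ts 0 true, ts 2 false);
      (ts 0 true, ts 3 true); (ts 0 true, ts 3 false);
      (ts 1 true, ts 2 true); (ts 1 true, ts 2 false);
      (ts 1 true, ts 3 true); (ts 1 true, ts 3 false);
      (ts 2 true, ts 3 true); (ts 2 true, ts 3 false)].
Definition posc : seq (nat * nat) :=
  [:: (0, 2); (0, 3); (0, 4); (0, 5); (0, 6); (0, 7); (2, 4); (2, 5); (2, 6); (2, 7); (4, 6); (4, 7)].

Lemma posc_E : posc = map (fun r => (code r.1, code r.2)) posroots.
Proof. by vm_compute. Qed.

Definition N (p : {perm Ts}) : nat := count (fun r => neg (p r.1) (p r.2)) posroots.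
Definition Nn (f : seq nat) : nat := count (fun r => negc (wc f r.1) (wc f r.2)) posc.

Lemma N_wpn f : N (wpn f) = Nn f.
Proof.
rewrite /Nn posc_E count_map; apply: eq_count => r /=.
by rewrite !wpnE neg_code !code_wf.
Qed.

Lemma N_le12 p : N p <= 12.
Proof. exact: count_size. Qed.

Local Open Scope nat_scope.
Definition Lnat : seq (seq nat) := [::[::];
  [::0];
  [::1];
  [::2];
  [::3];
  [::1;0];
  [::2;0];
  [::3;0];
  [::0;1];
  [::2;1];
  [::3;1];
  [::1;2];
  [::3;2];
  [::1;3];
  [::0;1;0];
  [::2;1;0];
  [::3;1;0];
  [::1;2;0];
  [::3;2;0];
  [::1;3;0];
  [::2;0;1];
  [::3;0;1];
  [::1;2;1];
  [::3;2;1];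
  [::1;3;1];
  [::0;1;2];
  [::3;1;2];
  [::1;3;2];
  [::0;1;3];
  [::2;1;3];
  [::2;0;1;0];
  [::3;0;1;0];
  [::1;2;1;0];
  [::3;2;1;0];
  [::1;3;1;0];
  [::0;1;2;0];
  [::3;1;2;0];
  [::1;3;2;0];
  [::0;1;3;0];
  [::2;1;3;0];
  [::1;2;0;1];
  [::3;2;0;1];
  [::1;3;0;1];
  [::0;1;2;1];
  [::3;1;2;1];
  [::1;3;2;1];
  [::0;1;3;1];
  [::2;1;3;1];
  [::3;0;1;2];
  [::1;3;1;2];
  [::0;1;3;2];
  [::2;1;3;2];
  [::2;0;1;3];
  [::1;2;0;1;0];
  [::3;2;0;1;0];
  [::1;3;0;1;0];
  [::0;1;2;1;0];
  [::3;1;2;1;0];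
  [::1;3;2;1;0];
  [::0;1;3;1;0];
  [::2;1;3;1;0];
  [::3;0;1;2;0];
  [::1;3;1;2;0];
  [::0;1;3;2;0];
  [::2;1;3;2;0];
  [::2;0;1;3;0];
  [::0;1;2;0;1];
  [::3;1;2;0;1];
  [::1;3;2;0;1];
  [::0;1;3;0;1];
  [::2;1;3;0;1];
  [::3;0;1;2;1];
  [::1;3;1;2;1];
  [::0;1;3;2;1];
  [::2;1;3;2;1];
  [::2;0;1;3;1];
  [::1;3;0;1;2];
  [::0;1;3;1;2];
  [::2;1;3;1;2];
  [::2;0;1;3;2];
  [::1;2;0;1;3];
  [::0;1;2;0;1;0];
  [::3;1;2;0;1;0];
  [::1;3;2;0;1;0];
  [::0;1;3;0;1;0];
  [::2;1;3;0;1;0];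
  [::3;0;1;2;1;0];
  [::1;3;1;2;1;0];
  [::0;1;3;2;1;0];
  [::2;1;3;2;1;0];
  [::2;0;1;3;1;0];
  [::1;3;0;1;2;0];
  [::0;1;3;1;2;0];
  [::2;1;3;1;2;0];
  [::2;0;1;3;2;0];
  [::1;2;0;1;3;0];
  [::3;0;1;2;0;1];
  [::1;3;1;2;0;1];
  [::0;1;3;2;0;1];
  [::2;1;3;2;0;1];
  [::2;0;1;3;0;1];
  [::1;3;0;1;2;1];
  [::0;1;3;1;2;1];
  [::2;1;3;1;2;1];
  [::2;0;1;3;2;1];
  [::1;2;0;1;3;1];
  [::0;1;3;0;1;2];
  [::2;1;3;0;1;2];
  [::2;0;1;3;1;2];
  [::1;2;0;1;3;2];
  [::3;1;2;0;1;3];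
  [::3;0;1;2;0;1;0];
  [::1;3;1;2;0;1;0];
  [::0;1;3;2;0;1;0];
  [::2;1;3;2;0;1;0];
  [::2;0;1;3;0;1;0];
  [::1;3;0;1;2;1;0];
  [::0;1;3;1;2;1;0];
  [::2;1;3;1;2;1;0];
  [::2;0;1;3;2;1;0];
  [::1;2;0;1;3;1;0];
  [::0;1;3;0;1;2;0];
  [::2;1;3;0;1;2;0];
  [::2;0;1;3;1;2;0];
  [::1;2;0;1;3;2;0];
  [::3;1;2;0;1;3;0];
  [::1;3;0;1;2;0;1];
  [::0;1;3;1;2;0;1];
  [::2;1;3;1;2;0;1];
  [::2;0;1;3;2;0;1];
  [::1;2;0;1;3;0;1];
  [::0;1;3;0;1;2;1];
  [::2;1;3;0;1;2;1];
  [::2;0;1;3;1;2;1];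
  [::1;2;0;1;3;2;1];
  [::3;1;2;0;1;3;1];
  [::2;0;1;3;0;1;2];
  [::1;2;0;1;3;1;2];
  [::3;1;2;0;1;3;2];
  [::1;3;0;1;2;0;1;0];
  [::0;1;3;1;2;0;1;0];
  [::2;1;3;1;2;0;1;0];
  [::2;0;1;3;2;0;1;0];
  [::1;2;0;1;3;0;1;0];
  [::0;1;3;0;1;2;1;0];
  [::2;1;3;0;1;2;1;0];
  [::2;0;1;3;1;2;1;0];
  [::1;2;0;1;3;2;1;0];
  [::3;1;2;0;1;3;1;0];
  [::2;0;1;3;0;1;2;0];
  [::1;2;0;1;3;1;2;0];
  [::3;1;2;0;1;3;2;0];
  [::0;1;3;0;1;2;0;1];
  [::2;1;3;0;1;2;0;1];
  [::2;0;1;3;1;2;0;1];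
  [::1;2;0;1;3;2;0;1];
  [::3;1;2;0;1;3;0;1];
  [::2;0;1;3;0;1;2;1];
  [::1;2;0;1;3;1;2;1];
  [::3;1;2;0;1;3;2;1];
  [::1;2;0;1;3;0;1;2];
  [::3;1;2;0;1;3;1;2];
  [::0;1;3;0;1;2;0;1;0];
  [::2;1;3;0;1;2;0;1;0];
  [::2;0;1;3;1;2;0;1;0];
  [::1;2;0;1;3;2;0;1;0];
  [::3;1;2;0;1;3;0;1;0];
  [::2;0;1;3;0;1;2;1;0];
  [::1;2;0;1;3;1;2;1;0];
  [::3;1;2;0;1;3;2;1;0];
  [::1;2;0;1;3;0;1;2;0];
  [::3;1;2;0;1;3;1;2;0];
  [::2;0;1;3;0;1;2;0;1];
  [::1;2;0;1;3;1;2;0;1];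
  [::3;1;2;0;1;3;2;0;1];
  [::1;2;0;1;3;0;1;2;1];
  [::3;1;2;0;1;3;1;2;1];
  [::3;1;2;0;1;3;0;1;2];
  [::2;0;1;3;0;1;2;0;1;0];
  [::1;2;0;1;3;1;2;0;1;0];
  [::3;1;2;0;1;3;2;0;1;0];
  [::1;2;0;1;3;0;1;2;1;0];
  [::3;1;2;0;1;3;1;2;1;0];
  [::3;1;2;0;1;3;0;1;2;0];
  [::1;2;0;1;3;0;1;2;0;1];
  [::3;1;2;0;1;3;1;2;0;1];
  [::3;1;2;0;1;3;0;1;2;1];
  [::1;2;0;1;3;0;1;2;0;1;0];
  [::3;1;2;0;1;3;1;2;0;1;0];
  [::3;1;2;0;1;3;0;1;2;1;0];
  [::3;1;2;0;1;3;0;1;2;0;1];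
  [::3;1;2;0;1;3;0;1;2;0;1;0]].
Definition w0w : seq nat := [:: 0;1;2;3;0;1;2;3;0;1;2;3].
Definition w0 := wpn w0w.

Lemma L_checks : all (fun f => [&& Nn f == size f, Nn (rev f) == Nn f,
   (Nn f == 12) ==> eqw f w0w &
   all (fun k => Nn (k :: f) <= (Nn f).+1) [:: 0;1;2;3]]) Lnat.
Proof. vm_compute. reflexivity. Qed.
Lemma L_closed : all (fun f => all (fun k => has (fun h => eqw (k :: f) h) Lnat) [:: 0;1;2;3]) Lnat.
Proof. vm_compute. reflexivity. Qed.
Lemma nil_L : [::] \in Lnat.
Proof. by []. Qed.
Lemma Nw0 : Nn w0w = 12.
Proof. vm_compute. reflexivity. Qed.

Lemma o4_small k : val (o4 k) \in [:: 0; 1; 2; 3].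
Proof. by case: k => [|[|[|[|k]]]]. Qed.

Lemma gn_o4 k : gn k = gn (val (o4 k)).
Proof. by rewrite /gn o4_val. Qed.

Lemma wpn_o4 k f : wpn (k :: f) = wpn (val (o4 k) :: f).
Proof. by rewrite !wpn_cons gn_o4. Qed.

Lemma gnn k : (gn k * gn k = 1)%g.
Proof.
rewrite gn_o4; have := o4_small k; set m := val (o4 k).
have H : forall m, m \in [:: 0; 1; 2; 3] -> eqw [:: m; m] [::].
  by move=> m'; rewrite !inE => /or4P [] /eqP ->; vm_compute.
by move/H/eqwP; rewrite !wpn_cons wpn_nil mulg1.
Qed.

Lemma gnV k : ((gn k)^-1 = gn k)%g.
Proof. by apply: (mulgI (gn k)); rewrite mulgV gnn. Qed.

Lemma genV (i : 'I_4) : ((gen i)^-1 = gen i)%g.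
Proof. by rewrite genE gnV. Qed.

Lemma gen_gen (i : 'I_4) : (gen i * gen i = 1)%g.
Proof. by rewrite genE gnn. Qed.

Lemma gen_neq1 (i : 'I_4) : gen i != 1%g.
Proof.
rewrite genE; apply/eqP => H.
have : all (fun x => g (val i) x == x) pts.
  by apply/allP => x _; rewrite -gnE H perm1.
by case: i {H} => [[|[|[|[|k]]]] Hk]; vm_compute.
Qed.

Lemma wpn_rev f : ((wpn f)^-1 = wpn (rev f))%g.
Proof.
elim: f => [|k f IH]; first by rewrite wpn_nil invg1.
by rewrite wpn_cons invMg IH gnV rev_cons -cats1 wpn_cat wpn_cons wpn_nil mulg1.
Qed.

Lemma word_prod_wpn (s : seq 'I_4) : word_prod s = wpn (map val s).
Proof. by rewrite /wpn -map_comp (@eq_map _ _ (o4 \o val) id o4_val) map_id. Qed.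

Lemma word_WK (K : {set 'I_4}) (s : seq 'I_4) : all (fun i => i \in K) s -> word_prod s \in WK K.
Proof.
elim: s => [|i s IH] /=; first by rewrite /word_prod big_nil group1.
move/andP=> [Hi Hs]; rewrite /word_prod big_cons groupM ?IH //.
by rewrite mem_gen // imset_f.
Qed.

Lemma wpn_WD4 f : wpn f \in WD4.
Proof. by apply: word_WK; apply/allP => i _; rewrite inE. Qed.

Lemma gen_WK (K : {set 'I_4}) (i : 'I_4) : i \in K -> gen i \in WK K.
Proof. by move=> Hi; rewrite mem_gen // imset_f. Qed.

Lemma WK_word (K : {set 'I_4}) w : w \in WK K -> exists s : seq 'I_4, all (fun i => i \in K) s /\ w = word_prod s.
Proof.
case/gen_prodgP => n [c Hc ->].
pose pk (i : 'I_n) := odflt o0 [pick j in K | c i == gen j].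
have Hpk : forall i, pk i \in K /\ c i = gen (pk i).
  move=> i; rewrite /pk; case: pickP => [j /andP [Hj /eqP ->] //| H].
  by case/imsetP: (Hc i) => j Hj Hcj; move: (H j); rewrite Hj Hcj eqxx.
exists (map pk (enum 'I_n)); split.
  by apply/allP => j /mapP [i _ ->]; case: (Hpk i).
rewrite /word_prod big_map enumT; apply: eq_bigr => i _; by case: (Hpk i).
Qed.

Lemma wpn_L f : exists2 h, h \in Lnat & wpn f = wpn h.
Proof.
elim: f => [|k f [h Hh IH]]; first by exists [::].
rewrite wpn_o4 wpn_cons IH -wpn_cons.
have := o4_small k; set m := val (o4 k) => Hm.
move/allP: L_closed => /(_ h Hh) /allP /(_ m Hm) /hasP [h' Hh' E].
by exists h' => //; apply: eqwP.
Qed.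

Lemma WD4_L w : w \in WD4 -> exists2 h, h \in Lnat & w = wpn h.
Proof.
case/WK_word => s [_ ->]; rewrite word_prod_wpn; exact: wpn_L.
Qed.

Lemma L_check_at f : f \in Lnat -> [&& Nn f == size f, Nn (rev f) == Nn f,
   (Nn f == 12) ==> eqw f w0w &
   all (fun k => Nn (k :: f) <= (Nn f).+1) [:: 0;1;2;3]].
Proof. by move=> Hf; move/allP: L_checks => /(_ f Hf). Qed.

Lemma N_gen_le w k : w \in WD4 -> N (gn k * w)%g <= (N w).+1.
Proof.
case/WD4_L => h Hh ->; rewrite -wpn_cons wpn_o4 !N_wpn.
case/and4P: (L_check_at Hh) => _ _ _ /allP; apply; exact: o4_small.
Qed.

Lemma N_inv w : w \in WD4 -> N w^-1 = N w.
Proof.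
case/WD4_L => h Hh ->; rewrite wpn_rev !N_wpn.
by case/and4P: (L_check_at Hh) => _ /eqP.
Qed.

Lemma N_12 w : w \in WD4 -> N w = 12 -> w = w0.
Proof.
case/WD4_L => h Hh -> ; rewrite N_wpn => H12; apply: eqwP.
by case/and4P: (L_check_at Hh) => _ _ /implyP H _; apply: H; rewrite H12.
Qed.

Lemma N_red w : w \in WD4 -> exists f, wpn f = w /\ size f = N w.
Proof.
case/WD4_L => h Hh ->; exists h; split => //; rewrite N_wpn.
by case/and4P: (L_check_at Hh) => /eqP.
Qed.

Lemma LB f : N (wpn f) <= size f.
Proof.
elim: f => [|k f IH]; first by rewrite N_wpn; vm_compute.
rewrite wpn_cons; apply: leq_trans (N_gen_le _ (wpn_WD4 f)) _; by rewrite ltnS.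
Qed.

Lemma coxlen_N w : w \in WD4 -> coxlen w (N w).
Proof.
move=> Hw; split.
  case: (N_red Hw) => f [Hf Hs]; exists (map o4 f); split; first by rewrite size_map.
  exact: Hf.
move=> s Hs; rewrite -Hs word_prod_wpn; apply: leq_trans (LB _) _; by rewrite size_map.
Qed.

Lemma coxlen_uniq w n m : coxlen w n -> coxlen w m -> n = m.
Proof.
move=> [[s [Hs Ew]] Hn] [[t [Ht Et]] Hm].
apply/eqP; rewrite eqn_leq; apply/andP; split.
  by rewrite -Ht; apply: Hn.
by rewrite -Hs; apply: Hm.
Qed.

Lemma coxlenE w n : w \in WD4 -> coxlen w n -> n = N w.
Proof. move=> Hw H; exact: coxlen_uniq H (coxlen_N Hw). Qed.

Lemma w0_WD4 : w0 \in WD4.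
Proof. exact: wpn_WD4. Qed.

Lemma N_w0 : N w0 = 12.
Proof. by rewrite /w0 N_wpn Nw0. Qed.

Lemma w0V : (w0^-1 = w0)%g.
Proof. rewrite /w0 wpn_rev; apply: eqwP; vm_compute; reflexivity. Qed.

Lemma wp_cons (i : 'I_4) s : word_prod (i :: s) = (gen i * word_prod s)%g.
Proof. by rewrite /word_prod big_cons. Qed.

Lemma wp_nil : word_prod [::] = 1%g.
Proof. by rewrite /word_prod big_nil. Qed.

Lemma wp_cat s t : word_prod (s ++ t) = (word_prod s * word_prod t)%g.
Proof. by rewrite /word_prod big_cat. Qed.

Lemma wp_rev s : word_prod (rev s) = ((word_prod s)^-1)%g.
Proof.
elim: s => [|i s IH]; first by rewrite wp_nil invg1.
by rewrite rev_cons -cats1 wp_cat IH !wp_cons wp_nil mulg1 invMg genV.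
Qed.

Lemma LBw (s : seq 'I_4) : N (word_prod s) <= size s.
Proof. by rewrite word_prod_wpn; apply: leq_trans (LB _) _; rewrite size_map. Qed.

Lemma gen_WD4 i : gen i \in WD4.
Proof. by apply: gen_WK; rewrite inE. Qed.

Lemma wp_WD4 s : word_prod s \in WD4.
Proof. by rewrite word_prod_wpn wpn_WD4. Qed.

Section Build.
Variable T : Type.
Variable delta : T -> T -> {perm Ts}.
Variable theta : T -> T.
Variable sigma : {perm 'I_4}.
Hypothesis Hb : is_building delta.
Hypothesis Hth : thick delta.
Hypothesis Htr : is_triality delta theta sigma.

Local Notation d := delta.
Local Open Scope group_scope.

Lemma d_W C D : d C D \in WD4.
Proof. by case: Hb. Qed.

Lemma d1 C D : d C D = 1 <-> C = D.
Proof. by case: Hb. Qed.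

Lemma d_refl C : d C C = 1.
Proof. by apply/d1. Qed.

Lemma WD2a C C' D i : d C' C = gen i -> d C' D = gen i * d C D \/ d C' D = d C D.
Proof. by move=> E; case: Hb => _ _ _ H _; case: (H C C' D i E). Qed.

Lemma WD2b C C' D i : d C' C = gen i -> N (gen i * d C D) = (N (d C D)).+1 ->
  d C' D = gen i * d C D.
Proof.
move=> E HN; case: Hb => _ _ _ H _; case: (H C C' D i E) => _ H2; apply: (H2 (N (d C D))).
  exact: coxlen_N (d_W _ _).
by rewrite -HN; apply: coxlen_N; rewrite groupM ?d_W ?gen_WD4.
Qed.

Lemma WD3 C D i : exists C', d C' C = gen i /\ d C' D = gen i * d C D.
Proof. by case: Hb => _ _ _ _ H; apply: H. Qed.

Lemma adj_sym C C' i : d C' C = gen i -> d C C' = gen i.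
Proof.
move=> H; case: (WD2a C' H); rewrite d_refl => E.
  have -> : d C C' = gen i * (gen i * d C C') by rewrite mulgA gen_gen mul1g.
  by rewrite -E mulg1.
by move: H; rewrite (proj1 (d1 C C') (esym E)) d_refl => /eqP; rewrite eq_sym (negbTE (gen_neq1 i)).
Qed.

Fixpoint path (f : seq 'I_4) (x y : T) : Prop :=
  match f with
  | [::] => x = y
  | i :: f' => exists x1, d x x1 = gen i /\ path f' x1 y
  end.

Lemma path_cat f h x y z : path f x z -> path h z y -> path (f ++ h) x y.
Proof.
elim: f x => [|i f IH] x /=; first by move=> ->.
by move=> [x1 [H1 H2]] Hh; exists x1; split => //; apply: IH H2 Hh.
Qed.

Lemma path_rev f x y : path f x y -> path (rev f) y x.
Proof.
elim: f x => [|i f IH] x /=; first by move=> ->.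
move=> [x1 [H1 H2]]; rewrite rev_cons -cats1; apply: path_cat (IH _ H2) _.
by exists x; split => //; apply: adj_sym.
Qed.

Lemma path_P f x y : d x y = word_prod f -> path f x y.
Proof.
elim: f x => [|i f IH] x /=; first by rewrite wp_nil => /d1.
rewrite wp_cons => E; case: (WD3 x y i) => C' [H1 H2].
exists C'; split; first exact: adj_sym.
by apply: IH; rewrite H2 E mulgA gen_gen mul1g.
Qed.

Lemma path_G f x y : path f x y -> N (word_prod f) = size f -> d x y = word_prod f.
Proof.
elim: f x => [|i f IH] x /=; first by move=> ->; rewrite d_refl wp_nil.
move=> [x1 [H1 H2]] HN.
have Hf : N (word_prod f) = size f.
  apply/eqP; rewrite eqn_leq LBw /=.
  have := N_gen_le (val i) (wp_WD4 f); rewrite -genE -wp_cons HN ltnS //.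
have E := IH _ H2 Hf.
rewrite wp_cons -E; apply: WD2b H1 _.
by rewrite E -wp_cons HN Hf.
Qed.

Lemma d_sym x y : d y x = (d x y)^-1.
Proof.
case: (N_red (d_W x y)) => f [Hf Hs].
have P : path (map o4 f) x y by apply: path_P; rewrite -Hf.
have P' := path_rev P.
rewrite (path_G P'); first by rewrite wp_rev -Hf.
rewrite wp_rev size_rev size_map -/(wpn f) Hf.
by rewrite N_inv ?d_W // Hs.
Qed.

Lemma WD2ra C D D' t : d D D' = gen t -> d C D' = d C D * gen t \/ d C D' = d C D.
Proof.
move=> /adj_sym H; case: (WD2a C H) => E; [left|right];
  by rewrite (d_sym D' C) E ?invMg ?genV -d_sym.
Qed.

Lemma WD2rb C D D' t : d D D' = gen t -> N (d C D * gen t) = (N (d C D)).+1 ->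
  d C D' = d C D * gen t.
Proof.
move=> /adj_sym H HN.
have Hm : d C D * gen t \in WD4 by rewrite groupM ?d_W ?gen_WD4.
rewrite (d_sym D' C) (WD2b (D:=C) H) ?invMg ?genV -?d_sym //.
by rewrite (d_sym C D) -{1}genV -invMg (N_inv Hm) (N_inv (d_W _ _)).
Qed.

Lemma path_theta f x y : path f x y -> path (map sigma f) (theta x) (theta y).
Proof.
case: Htr => _ Hadj _ _.
elim: f x => [|i f IH] x /=; first by move=> ->.
by move=> [x1 [H1 H2]]; exists (theta x1); split; [exact: (proj1 (Hadj _ _ _) H1) | apply: IH].
Qed.

Lemma path_inv (Q : {perm Ts} -> Prop) (A : pred 'I_4) :
  (forall p j, A j -> Q p -> Q (p * gen j)) ->
  forall f u v x, path f u v -> all A f -> Q (d x u) -> Q (d x v).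
Proof.
move=> HQ; elim=> [|i f IH] u v x /=; first by move=> ->.
move=> [x1 [H1 H2]] /andP [Ai Af] Qu; apply: (IH x1) => //.
by case: (WD2ra x H1) => ->; [apply: HQ|].
Qed.

Lemma opp_w0 x y : opp_ch d x y <-> d x y = w0.
Proof.
split.
  move=> H; have := H w0 12 (N (d x y)) w0_WD4.
  rewrite -{1}N_w0 => /(_ (coxlen_N w0_WD4) (coxlen_N (d_W x y))) H12.
  apply: N_12; first exact: d_W.
  by apply/eqP; rewrite eqn_leq N_le12.
move=> E w n m Hw Hn Hm.
rewrite (coxlenE Hw Hn) (coxlenE (d_W x y) Hm) E N_w0; exact: N_le12.
Qed.



Lemma ch_T z x : chambers_of d z setT x -> x = z.
Proof.
rewrite /chambers_of setCT /WK imset0 gen0 inE => /eqP /d1 ->; done.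
Qed.

Lemma inOpp_chamber z : d z (theta z) = w0 -> in_Opp d theta z setT.
Proof.
move=> E; split.
  move=> x /ch_T ->; exists (theta z); split.
    by exists z; split => //; rewrite /chambers_of d_refl group1.
  exact/opp_w0.
move=> y [x [/ch_T -> ->]]; exists z; split.
  by rewrite /chambers_of d_refl group1.
by apply/opp_w0; rewrite d_sym E w0V.
Qed.

Lemma ExOpp x : exists y, d x y = w0.
Proof.
have H : forall f : seq 'I_4, exists y, d y x = word_prod f.
  elim=> [|i f [y IH]]; first by exists x; rewrite d_refl wp_nil.
  case: (WD3 y x i) => C' [_ H2]; exists C'; by rewrite H2 IH wp_cons.
case: (H (map o4 w0w)) => y Hy; exists y; by rewrite d_sym Hy -/(wpn w0w) w0V.
Qed.

Lemma inOpp_empty C : in_Opp d theta C set0.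
Proof.
case: Htr => [[g _ Hg] _ _ _].
have HA : forall x, chambers_of d C set0 x by move=> x; rewrite /chambers_of setC0 d_W.
split.
  move=> x _; case: (ExOpp x) => y Hy; exists y; split; last exact/opp_w0.
  by exists (g y); split => //; rewrite Hg.
move=> y _; case: (ExOpp y) => x Hx; exists x; split => //; exact/opp_w0.
Qed.

Definition ol : seq 'I_4 := [:: o0; o1; o2; o3].

Lemma mem_ol (i : 'I_4) : [\/ i = o0, i = o1, i = o2 | i = o3].
Proof.
by case: i => [[|[|[|[|k]]]] Hk] //; [constructor 1|constructor 2|constructor 3|constructor 4];
  apply/val_inj.
Qed.

Definition ff (a b c x : 'I_4) : 'I_4 :=
  if x == o0 then a else if x == o1 then o1 else if x == o2 then b else c.

Lemma orient_bf : all (fun a => all (fun b => all (fun c =>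
  [&& uniq [:: a; o1; b; c], ff a b c (ff a b c (ff a b c o0)) == o0,
      ff a b c (ff a b c (ff a b c o2)) == o2, ff a b c (ff a b c (ff a b c o3)) == o3 &
      ~~ [&& a == o0, b == o2 & c == o3]] ==>
  (((a == o2) && (b == o3) && (c == o0)) || ((a == o3) && (c == o2) && (b == o0))))
   ol) ol) ol.
Proof. vm_compute. reflexivity. Qed.

Lemma sigma1 : sigma o1 = o1.
Proof.
case: Htr => _ _ H _; have -> : o1 = inord 1 by apply/val_inj; rewrite /= inordK.
exact: H.
Qed.

Lemma sigma3 x : sigma (sigma (sigma x)) = x.
Proof.
case: Htr => _ _ _ H.
have := expg_order sigma; rewrite H => E.
rewrite -!permM.
have -> : (sigma * (sigma * sigma))%g = (sigma ^+ 3)%g by rewrite !expgS expg0 mulg1.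
by rewrite E perm1.
Qed.

Lemma sigma_ne1 : sigma != 1%g.
Proof.
case: Htr => _ _ _ H; apply/eqP => E; move: H; rewrite E order1 //.
Qed.

Lemma orient : (sigma o0 = o2 /\ sigma o2 = o3 /\ sigma o3 = o0) \/
               (sigma o0 = o3 /\ sigma o3 = o2 /\ sigma o2 = o0).
Proof.
have Hf : forall y, ff (sigma o0) (sigma o2) (sigma o3) y = sigma y.
  by move=> y; case: (mem_ol y) => ->; rewrite /ff //= sigma1.
have Hmem : forall i : 'I_4, i \in ol by move=> i; case: (mem_ol i) => ->.
move/allP: orient_bf => /(_ _ (Hmem (sigma o0))) /allP /(_ _ (Hmem (sigma o2)))
   /allP /(_ _ (Hmem (sigma o3))) /implyP.
rewrite !Hf !sigma3 !eqxx.
have Hu : uniq [:: sigma o0; o1; sigma o2; sigma o3].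
  have : uniq (map sigma ol) by rewrite (map_inj_uniq (@perm_inj _ sigma)).
  by rewrite /= sigma1.
rewrite Hu /=.
have Hn : ~~ [&& sigma o0 == o0, sigma o2 == o2 & sigma o3 == o3].
  apply/negP => /and3P [/eqP E0 /eqP E2 /eqP E3]; move: sigma_ne1.
  have -> : sigma = 1%g.
    by apply/permP => y; rewrite perm1; case: (mem_ol y) => ->; rewrite ?sigma1.
  by rewrite eqxx.
move=> /(_ Hn) /orP [/andP [/andP [/eqP -> /eqP ->] /eqP ->] | /andP [/andP [/eqP -> /eqP ->] /eqP ->]];
  [left|right]; do !split.
Qed.

Lemma wpn1 k : wpn [:: k] = gn k.
Proof. by rewrite wpn_cons wpn_nil mulg1. Qed.

Lemma adjT x x' (i : 'I_4) : d x x' = gen i -> d (theta x) (theta x') = gen (sigma i).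
Proof. by case: Htr => _ Hadj _ _ H; exact: (proj1 (Hadj _ _ _) H). Qed.

Lemma stepN x (i t : nat) f : d x (theta x) = wpn f -> sigma (o4 i) = o4 t ->
  Nn (i :: f) == (Nn f).+1 -> Nn ((i :: f) ++ [:: t]) == (Nn (i :: f)).+1 ->
  exists x', d x' (theta x') = wpn ((i :: f) ++ [:: t]).
Proof.
move=> E Hs /eqP H1 /eqP H2.
case: (Hth x (o4 i)) => x' [_ [_ Hx' _]].
exists x'.
have A1 : d x' x = gen (o4 i) := adj_sym Hx'.
have E1 : d x' (theta x) = wpn (i :: f).
  rewrite wpn_cons -E; apply: WD2b A1 _.
  by rewrite E -[gen (o4 i)]/(gn i) -wpn_cons !N_wpn.
have A2 : d (theta x) (theta x') = gen (o4 t) by rewrite -Hs; apply: adjT.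
rewrite wpn_cat wpn1 -E1; apply: WD2rb A2 _.
by rewrite E1 -[gen (o4 t)]/(gn t) -wpn1 -wpn_cat !N_wpn.
Qed.

Lemma singleN x (r s : nat) f : d x (theta x) = wpn f -> sigma (o4 r) = o4 s ->
  (Nn (r :: f)).+1 == Nn f -> Nn (f ++ [:: s]) == (Nn f).+1 -> eqw (f ++ [:: s]) w0w ->
  exists z, d z (theta z) = w0.
Proof.
move=> E Hs /eqP H1 /eqP H2 /eqwP H3.
case: (Hth x (o4 r)) => C1 [C2 [Hne H1' H2']].
case: (WD3 x (theta x) (o4 r)) => p [Hp1 Hp2].
have [x' [Hx' Hxp]] : exists x', d x x' = gen (o4 r) /\ x' <> p.
  case: (classic (C1 = p)) => [Ep|Np]; last by exists C1.
  by exists C2; split => // E2; apply: Hne; rewrite Ep E2.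
exists x'.
have A1 : d x' x = gen (o4 r) := adj_sym Hx'.
have E1 : d x' (theta x) = wpn f.
  case: (WD2a (theta x) A1) => E'; last by rewrite E' E.
  exfalso.
  have Hxp' : d x p = gen (o4 r) := adj_sym Hp1.
  case: (WD2a p A1) => E''.
    by apply: Hxp; apply/d1; rewrite E'' Hxp' gen_gen.
  have A3 : d x' p = gen (o4 r) by rewrite E''.
  have E3 : d x' (theta x) = gen (o4 r) * d p (theta x).
    apply: WD2b A3 _.
    rewrite Hp2 E mulgA gen_gen mul1g -[gen (o4 r)]/(gn r) -wpn_cons !N_wpn.
    by rewrite H1.
  have : wpn (r :: f) = wpn f.
    by rewrite wpn_cons -E -E' E3 Hp2 mulgA gen_gen mul1g.
  move/(congr1 N); rewrite !N_wpn -H1 => E0.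
  by have := leqnn (Nn (r :: f)).+1; rewrite {1}E0 ltnn.
have A2 : d (theta x) (theta x') = gen (o4 s) by rewrite -Hs; apply: adjT.
rewrite /w0 -H3 wpn_cat wpn1 -E1; apply: WD2rb A2 _.
by rewrite E1 -[gen (o4 s)]/(gn s) -wpn1 -wpn_cat !N_wpn.
Qed.

Arguments stepN : clear implicits.
Arguments singleN : clear implicits.

Definition Enat : seq (seq nat) :=
  [:: [::]; [::0]; [::2]; [::3]; [::0;2]; [::0;3]; [::2;3]; [::0;2;3]].

Lemma core x e : e \in Enat -> d x (theta x) = wpn (w0w ++ e) -> exists z, d z (theta z) = w0.
Proof.
move=> He E.
case: orient => [[S0 [S2 S3]]|[S0 [S3 S2]]];
move: He E; rewrite !inE => /orP [/eqP ->|/orP [/eqP ->|/orP [/eqP ->|/orP [/eqP ->|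
  /orP [/eqP ->|/orP [/eqP ->|/orP [/eqP ->|/eqP ->]]]]]]] E.
- by exists x; rewrite E cats0.
- by apply: (singleN x 3 0 _ E) => //; vm_compute.
- by apply: (singleN x 0 2 _ E) => //; vm_compute.
- by apply: (singleN x 2 3 _ E) => //; vm_compute.
- case: (stepN x 0 2 _ E S0) => //; try (vm_compute; reflexivity).
  move=> x' E'; exists x'; rewrite E'; apply: eqwP; vm_compute; reflexivity.
- case: (stepN x 3 0 _ E S3) => //; try (vm_compute; reflexivity).
  move=> x' E'; exists x'; rewrite E'; apply: eqwP; vm_compute; reflexivity.
- case: (stepN x 2 3 _ E S2) => //; try (vm_compute; reflexivity).
  move=> x' E'; exists x'; rewrite E'; apply: eqwP; vm_compute; reflexivity.
- case: (stepN x 0 2 _ E S0) => //; try (vm_compute; reflexivity).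
  move=> x' E'.
  have E'' : d x' (theta x') = wpn (w0w ++ [:: 3]) by rewrite E'; apply: eqwP; vm_compute; reflexivity.
  by apply: (singleN x' 2 3 _ E'') => //; vm_compute.
- by exists x; rewrite E cats0.
- by apply: (singleN x 2 0 _ E) => //; vm_compute.
- by apply: (singleN x 3 2 _ E) => //; vm_compute.
- by apply: (singleN x 0 3 _ E) => //; vm_compute.
- case: (stepN x 2 0 _ E S2) => //; try (vm_compute; reflexivity).
  move=> x' E'; exists x'; rewrite E'; apply: eqwP; vm_compute; reflexivity.
- case: (stepN x 0 3 _ E S0) => //; try (vm_compute; reflexivity).
  move=> x' E'; exists x'; rewrite E'; apply: eqwP; vm_compute; reflexivity.
- case: (stepN x 3 2 _ E S3) => //; try (vm_compute; reflexivity).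
  move=> x' E'; exists x'; rewrite E'; apply: eqwP; vm_compute; reflexivity.
- case: (stepN x 0 3 _ E S0) => //; try (vm_compute; reflexivity).
  move=> x' E'.
  have E'' : d x' (theta x') = wpn (w0w ++ [:: 2]) by rewrite E'; apply: eqwP; vm_compute; reflexivity.
  by apply: (singleN x' 3 2 _ E'') => //; vm_compute.
Qed.

Lemma Eclosed_ok : all (fun e => all (fun k => has (fun e' => eqw (w0w ++ e ++ [:: k]) (w0w ++ e')) Enat) [:: 0; 2; 3]%N) Enat.
Proof. vm_compute. reflexivity. Qed.

Arguments path_inv : clear implicits.

Lemma chC C J : chambers_of d C J C.
Proof. by rewrite /chambers_of d_refl group1. Qed.

Lemma claim2 C J : in_Opp d theta C J -> o1 \in J -> exists z, d z (theta z) = w0.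
Proof.
move=> [HA _] H1.
case: (HA C (chC C J)) => y [[x [Hx ->]] /opp_w0 Hy].
case: (WK_word Hx) => s [Hs Es].
have P1 := path_rev (path_theta (path_P Es)).
pose Q := fun p : {perm Ts} => exists2 e, e \in Enat & p = wpn (w0w ++ e).
have HQ : forall p j, (fun j => j != o1) j -> Q p -> Q (p * gen j).
  move=> p j /= Hj [e He ->].
  have Hk : val j \in [:: 0; 2; 3]%N by case: (mem_ol j) Hj => ->.
  move/allP: Eclosed_ok => /(_ e He) /allP /(_ _ Hk) /hasP [e' He' /eqwP Ee'].
  by exists e' => //; rewrite genE -wpn1 -wpn_cat -catA.
have HA' : all (fun j => j != o1) (rev (map sigma s)).
  rewrite all_rev all_map; apply/allP => j Hj /=.
  move/allP: Hs => /(_ j Hj); rewrite inE => Hj'.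
  apply/eqP => E; move: E; rewrite -sigma1 => /perm_inj E; move: Hj'; by rewrite E H1.
have := path_inv Q (fun j => j != o1) HQ _ _ _ C P1 HA'.
case.
  by exists [::]; rewrite // cats0 Hy.
move=> e He E; exact: core He E.
Qed.

Definition Sset (k : nat) : seq Ts :=
  match k with
  | 0 => [:: ts 0 true]
  | 1 => [:: ts 0 true; ts 0 false; ts 1 true; ts 1 false]
  | 2 => [:: ts 0 true; ts 1 true; ts 2 true; ts 3 false]
  | _ => [:: ts 0 true; ts 1 true; ts 2 true; ts 3 true]
  end.

Lemma Sset_ok : all (fun k => all (fun j => (j != k) ==> all (fun z => g j z \in Sset k) (Sset k))
   [:: 0; 1; 2; 3]%N) [:: 0; 1; 2; 3]%N.
Proof. vm_compute. reflexivity. Qed.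

Lemma Sset_bad : all (fun k => ~~ all (fun z => wf (rev (k :: w0w) ++ w0w) z \in Sset k) (Sset k))
   [:: 0; 1; 2; 3]%N.
Proof. vm_compute. reflexivity. Qed.

Lemma Fstab C J i : in_Opp d theta C J -> i \in J -> sigma i \in J.
Proof.
move=> [HA _] Hi; apply/negPn/negP => Hs.
case: (HA C (chC C J)) => y [[x1 [Hx1 ->]] /opp_w0 Hy].
case: (WD3 C (theta x1) (sigma i)) => x' [Hx'1 Hx'2].
have Hx'A : chambers_of d C J x'.
  by rewrite /chambers_of (adj_sym Hx'1) gen_WK // inE.
case: (HA x' Hx'A) => y' [[x2 [Hx2 ->]] /opp_w0 Hy'].
case: (WK_word Hx1) => s1 [Hs1 Es1].
case: (WK_word Hx2) => s2 [Hs2 Es2].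
have P := path_cat (path_rev (path_theta (path_P Es1))) (path_theta (path_P Es2)).
pose k := val (sigma i).
have Hk : k \in [:: 0; 1; 2; 3]%N by rewrite /k; case: (mem_ol (sigma i)) => ->.
pose Q := fun p : {perm Ts} => all (fun z => (((gen (sigma i) * w0)^-1 * p) z) \in Sset k) (Sset k).
have HQ : forall p j, (fun j => j != sigma i) j -> Q p -> Q (p * gen j).
  move=> p j /= Hj /allP HQp; apply/allP => z Hz.
  rewrite mulgA permM genE gnE.
  have Hj' : val j \in [:: 0; 1; 2; 3]%N by case: (mem_ol j) => ->.
  move/allP: Sset_ok => /(_ k Hk) /allP /(_ _ Hj') /implyP.
  have Hjk : val j != k by apply: contra Hj => /eqP E; apply/eqP/val_inj.
  move=> /(_ Hjk) /allP; apply; exact: HQp.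
have HA' : all (fun j => j != sigma i) (rev (map sigma s1) ++ map sigma s2).
  rewrite all_cat all_rev !all_map; apply/andP; split; apply/allP => j Hj /=;
  [move/allP: Hs1 => /(_ j Hj) | move/allP: Hs2 => /(_ j Hj)]; rewrite inE => Hj';
  apply/eqP => /perm_inj E; move: Hj'; by rewrite E Hi.
have := path_inv Q _ HQ _ _ _ x' P HA'.
rewrite Hx'2 Hy Hy' /Q mulVg.
have -> : ((gen (sigma i) * w0)^-1 * w0)%g = wpn (rev (k :: w0w) ++ w0w).
  by rewrite wpn_cat -wpn_rev wpn_cons /w0 genE.
move=> H.
have H0 : all (fun z => (1%g : {perm Ts}) z \in Sset k) (Sset k) by apply/allP => z Hz; rewrite perm1.
have H' := H H0.
have : all (fun z => wf (rev (k :: w0w) ++ w0w) z \in Sset k) (Sset k).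
  by apply/allP => z Hz; rewrite -wpnE; exact: (allP H' z Hz).
move/allP: Sset_bad => /(_ k Hk) /negP; exact.
Qed.

Lemma orbit k i : k != o1 -> i != o1 -> [\/ i = k, i = sigma k | i = sigma (sigma k)].
Proof.
case: orient => [[S0 [S2 S3]]|[S0 [S3 S2]]];
case: (mem_ol k) => ->; case: (mem_ol i) => -> //= _ _;
do 3 rewrite ?S0 ?S2 ?S3;
first [by constructor 1 | by constructor 2 | by constructor 3].
Qed.

Lemma main : capped d theta.
Proof.
case: (classic (exists C, in_Opp d theta C setT)) => [[C HC]|HnT].
  exists C, setT; split => // i; split => _; last by rewrite inE.
  by exists C, setT; split => //; rewrite inE.
have Hno : forall z, d z (theta z) <> w0.
  by move=> z E; apply: HnT; exists z; apply: inOpp_chamber.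
have Hno1 : forall C J, in_Opp d theta C J -> o1 \notin J.
  move=> C J H; apply/negP => H1; case: (claim2 H H1) => z; exact: Hno.
case: (classic (exists C J, in_Opp d theta C J /\ J != set0)) => [[C [J [HCJ HJ]]]|Hn0].
  exists C, J; split => // i; split => [Hi|[C' [J' [H' Hi]]]]; first by exists C, J.
  case/set0Pn: HJ => k Hk.
  have Hk1 : k != o1 by apply/eqP => E; move: (Hno1 _ _ HCJ); rewrite -E Hk.
  have Hi1 : i != o1 by apply/eqP => E; move: (Hno1 _ _ H'); rewrite -E Hi.
  have S1 := Fstab HCJ Hk; have S2 := Fstab HCJ S1.
  by case: (orbit Hk1 Hi1) => ->.
case: Hb => [[C] _ _ _ _].
exists C, set0; split; first exact: inOpp_empty.
move=> i; split; first by rewrite inE.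
move=> [C' [J' [H' Hi]]]; exfalso; apply: Hn0; exists C', J'; split => //.
by apply/set0Pn; exists i.
Qed.

End Build.

Theorem theorem3p17 (T : Type) (delta : T -> T -> {perm Ts}) (theta : T -> T)
    (sigma : {perm 'I_4}) :
  is_building delta -> thick delta -> is_triality delta theta sigma ->
  capped delta theta.
Proof.
move=> Hb Hth Htr; exact: (main Hb Hth Htr).
Qed.
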